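(* Let $\mathfrak g$ be a finite-dimensional completely solvable Lie superalgebra over $\mathbf k$ with $N=\dim\mathfrak g$. Then (1) every minimal (graded) ideal of $\mathfrak g$ is one-dimensional; and (2) there exists a chain of graded ideals $\mathfrak g=\mathfrak g_0\supset\mathfrak g_1\supset\cdots\supset\mathfrak g_{N-1}\supset\mathfrak g_N=0$ of $\mathfrak g$ with $\dim\mathfrak g_i=N-i$ for all $i$.
   Context: $\mathbf k$ is algebraically closed of characteristic $p>2$. A Lie superalgebra $\mathfrak g$ is completely solvable if its derived sub-superalgebra $\mathfrak g^{(1)}=[\mathfrak g,\mathfrak g]$ is nilpotent. Ideals are $\mathbb Z_2$-graded. *)

(* Defs.v *)
From HB Require Import structures.
From mathcomp Require Import all_boot all_order all_algebra.
Set Implicit Arguments. Unset Strict Implicit. Unset Printing Implicit Defensive.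
Import GRing.Theory.
Local Open Scope ring_scope.


Section LieSuper.
Variables (K : fieldType) (V : vectType K).

(* homogeneous component of parity b (false = even, true = odd) *)
Definition comp (V0 V1 : {vspace V}) (b : bool) : {vspace V} :=
  if b then V1 else V0.

Definition sgn (a b : bool) : K := (-1) ^+ (a && b).

Definition is_lie_superalgebra (br : V -> V -> V) (V0 V1 : {vspace V}) : Prop :=
  ((V0 + V1)%VS = fullv /\ directv (V0 + V1)) /\
      (forall (a : K) (x y z : V), br (a *: x + y) z = a *: br x z + br y z) /\
      (forall (a : K) (x y z : V), br z (a *: x + y) = a *: br z x + br z y) /\
      (forall (i j : bool) (x y : V), x \in comp V0 V1 i -> y \in comp V0 V1 j ->
          br x y \in comp V0 V1 (i (+) j)) /\
      (forall (i j : bool) (x y : V), x \in comp V0 V1 i -> y \in comp V0 V1 j ->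
          br x y = - (sgn i j *: br y x)) /\
      (forall (i j : bool) (x y z : V), x \in comp V0 V1 i -> y \in comp V0 V1 j ->
          br x (br y z) = br (br x y) z + sgn i j *: br y (br x z)) /\
      (* [x,[x,x]] = 0 for odd x (needed as an axiom in characteristic 3) *)
      (forall x : V, x \in V1 -> br x (br x x) = 0).

Definition brack_vs (br : V -> V -> V) (A B : {vspace V}) : {vspace V} :=
  <<[seq br a b | a <- vbasis A, b <- vbasis B]>>.

Definition graded (V0 V1 : {vspace V}) (I : {vspace V}) : Prop :=
  I = ((I :&: V0) + (I :&: V1))%VS.

Definition graded_ideal br (V0 V1 I : {vspace V}) : Prop :=
  graded V0 V1 I /\ (brack_vs br fullv I <= I)%VS.

Definition minimal_graded_ideal br (V0 V1 I : {vspace V}) : Prop :=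
  [/\ graded_ideal br V0 V1 I, I != 0%VS &
      forall J : {vspace V}, graded_ideal br V0 V1 J -> (J <= I)%VS ->
        J = 0%VS \/ J = I].

(* lower central series of a subalgebra D : D^1 = D, D^(k+1) = [D, D^k] *)
Fixpoint lower_central br (D : {vspace V}) (k : nat) : {vspace V} :=
  match k with
  | 0 => D
  | k'.+1 => brack_vs br D (lower_central br D k')
  end.

Definition nilpotent_sub br (D : {vspace V}) : Prop :=
  exists k, lower_central br D k = 0%VS.

Definition derived br : {vspace V} := brack_vs br fullv fullv.

Definition completely_solvable br : Prop := nilpotent_sub br (derived br).

End LieSuper.

(* Main.v *)
From HB Require Import structures.
From mathcomp Require Import all_boot all_order all_algebra.
Require Import Defs.
From Stdlib Require Import Classical ClassicalEpsilon.
Set Implicit Arguments. Unset Strict Implicit. Unset Printing Implicit Defensive.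
Import GRing.Theory.
Local Open Scope ring_scope.

Section Eig.
Variables (K : closedFieldType) (W : vectType K).
Lemma exists_eig (f : 'End(W)) : (0 < \dim {:W})%N ->
  exists a, exists2 w, w != 0 & f w = a *: w.
Proof.
move=> dpos.
pose e := vbasis (fullv : {vspace W}).
have eb : basis_of fullv e := vbasisP fullv.
pose A := passmx.mxof e e f.
have /closed_rootP [a ra] : size (char_poly A) != 1%N.
  by rewrite size_char_poly; case: (\dim _) dpos.
have ea : eigenvalue A a by rewrite eigenvalue_root_char.
exists a.
have : passmx.leigenspace f a != 0%VS by rewrite (passmx.leigenspaceE eb) passmx.vsof_eq0.
rewrite -vpick0 => nz; exists (vpick (passmx.leigenspace f a)) => //.
have := memv_pick (passmx.leigenspace f a).
rewrite memv_ker add_lfunE opp_lfunE scale_lfunE id_lfunE subr_eq0 => /eqP //.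
Qed.
End Eig.


Section Main.
Variables (K : closedFieldType) (V : vectType K) (br : V -> V -> V) (V0 V1 : {vspace V}).
Hypothesis hLie : is_lie_superalgebra br V0 V1.
Hypothesis two_nz : (2%:R : K) != 0.

Let hfull : (V0 + V1)%VS = fullv := hLie.1.1.
Let hdir : directv (V0 + V1) := hLie.1.2.
Let hl := hLie.2.1.
Let hr := hLie.2.2.1.
Let hgr := hLie.2.2.2.1.
Let hjac := hLie.2.2.2.2.2.1.

Local Notation cp := (comp V0 V1).
Local Notation bs := (brack_vs br).
Local Notation gi := (graded_ideal br V0 V1).

Lemma br0l z : br 0 z = 0.
Proof. have h := hl 1 0 0 z; rewrite !scale1r addr0 in h.
by apply: (@addrI _ (br 0 z)); rewrite addr0 -h. Qed.
Lemma br0r z : br z 0 = 0.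
Proof. have h := hr 1 0 0 z; rewrite !scale1r addr0 in h.
by apply: (@addrI _ (br z 0)); rewrite addr0 -h. Qed.
Lemma brDl x y z : br (x + y) z = br x z + br y z.
Proof. by have := hl 1 x y z; rewrite !scale1r. Qed.
Lemma brDr x y z : br z (x + y) = br z x + br z y.
Proof. by have := hr 1 x y z; rewrite !scale1r. Qed.
Lemma brZl a x z : br (a *: x) z = a *: br x z.
Proof. by have := hl a x 0 z; rewrite !addr0 br0l addr0. Qed.
Lemma brZr a x z : br z (a *: x) = a *: br z x.
Proof. by have := hr a x 0 z; rewrite !addr0 br0r addr0. Qed.
Lemma brNr x z : br z (- x) = - br z x.
Proof. by rewrite -scaleN1r brZr scaleN1r. Qed.
Lemma brBr x y z : br z (x - y) = br z x - br z y.
Proof. by rewrite brDr brNr. Qed.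

Definition brL w := fun x => br x w.
Fact brL_lin w : linear (brL w). Proof. by move=> a u v; rewrite /brL hl. Qed.
HB.instance Definition _ w := GRing.isLinear.Build K V V *:%R (brL w) (brL_lin w).
Definition adr w : 'End(V) := linfun (brL w).
Lemma adrE w x : adr w x = br x w. Proof. by rewrite lfunE. Qed.
Definition brR w := fun x => br w x.
Fact brR_lin w : linear (brR w). Proof. by move=> a u v; rewrite /brR hr. Qed.
HB.instance Definition _ w := GRing.isLinear.Build K V V *:%R (brR w) (brR_lin w).
Definition ad w : 'End(V) := linfun (brR w).
Lemma adE w x : ad w x = br w x. Proof. by rewrite lfunE. Qed.

Let cap0 : (V0 :&: V1 = 0)%VS. Proof. exact/directv_addP. Qed.
Let cap0' : (V1 :&: V0 = 0)%VS. Proof. by rewrite capvC. Qed.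

Definition pi (b : bool) : 'End(V) := if b then daddv_pi V1 V0 else daddv_pi V0 V1.
Lemma pi_mem b w : pi b w \in cp b. Proof. by case: b; apply: memv_pi. Qed.
Lemma pi_sum w : pi false w + pi true w = w.
Proof. by apply: daddv_pi_add => //; rewrite hfull memvf. Qed.
Lemma pi_id b w : w \in cp b -> pi b w = w.
Proof. by case: b => /= h; apply: daddv_pi_id. Qed.
Lemma pi_0 b w : w \in cp (~~ b) -> pi b w = 0.
Proof.
move=> h; have := pi_sum w; case: b h => h.
  by rewrite (pi_id (b:=false)) // => /(canRL (addKr w)); rewrite addNr.
by rewrite (pi_id (b:=true)) // => /(canRL (addrK w)); rewrite subrr.
Qed.
Lemma pi_hom c k z : z \in cp k -> pi c z = if c == k then z else 0.
Proof.
move=> h; case: eqP => [->|/eqP ne]; first exact: pi_id.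
by apply: pi_0; case: c k ne h => [] [].
Qed.

Definition gradedb (U : {vspace V}) := forall b w, w \in U -> pi b w \in U.

Lemma graded_b U : graded V0 V1 U <-> gradedb U.
Proof.
split=> [hU b w | hU].
  rewrite {1}hU => /memv_addP [u0 hu0 [u1 hu1 ->]].
  move/memv_capP: hu0 => [hu0 h0]; move/memv_capP: hu1 => [hu1 h1].
  rewrite linearD /= (pi_hom b (k:=false) h0) (pi_hom b (k:=true) h1).
  by apply: memvD; case: ifP => _ //; apply: mem0v.
apply: subv_anti; apply/andP; split.
  apply/subvP=> w hw; rewrite -(pi_sum w); apply: memv_add; apply/memv_capP;
  by split; [apply: hU | apply: pi_mem].
by rewrite subv_add !capvSl.
Qed.

Lemma hom_dec (U : {vspace V}) w : pi false w \in U -> pi true w \in U -> w \in U.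
Proof. by move=> h0 h1; rewrite -(pi_sum w); apply: memvD. Qed.

Lemma brack_mem (A B : {vspace V}) a b : a \in A -> b \in B -> br a b \in bs A B.
Proof.
have hb x y : x \in vbasis A -> y \in vbasis B -> br x y \in bs A B.
  by move=> hx hy; apply: memv_span; apply: allpairs_f.
have /andP[/eqP hA _] := vbasisP A; have /andP[/eqP hB _] := vbasisP B.
move=> ha hbB.
have sB : (B <= lfun_preim (ad a) (bs A B))%VS.
  rewrite -{1}hB; apply/span_subvP => y hy; rewrite -memv_preim adE.
  have sA : (A <= lfun_preim (adr y) (bs A B))%VS.
    rewrite -{1}hA; apply/span_subvP => x hx; rewrite -memv_preim adrE.
    exact: hb.
  by move/subvP: sA => /(_ a ha); rewrite -memv_preim adrE.
by move/subvP: sB => /(_ b hbB); rewrite -memv_preim adE.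
Qed.

Lemma brack_sub (A B C : {vspace V}) : (forall a b, a \in A -> b \in B -> br a b \in C) ->
  (bs A B <= C)%VS.
Proof.
move=> H; apply/span_subvP => z /allpairsP [[x y] [hx hy ->]] /=.
by apply: H; apply: vbasis_mem.
Qed.

Lemma idealP (I : {vspace V}) : (bs fullv I <= I)%VS <-> (forall x v, v \in I -> br x v \in I).
Proof.
split=> [h x v hv | h]; first by apply: (subvP h); apply: brack_mem; rewrite ?memvf.
by apply: brack_sub => a b _; apply: h.
Qed.


Lemma gradedb0 : gradedb 0%VS.
Proof. by move=> b w; rewrite memv0 => /eqP ->; rewrite linear0 mem0v. Qed.
Lemma gradedbf : gradedb fullv.
Proof. by move=> b w _; rewrite memvf. Qed.
Lemma gradedbD U W : gradedb U -> gradedb W -> gradedb (U + W)%VS.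
Proof.
move=> hU hW b w /memv_addP [u hu [v hv ->]].
by rewrite linearD /=; apply: memv_add; [apply: hU | apply: hW].
Qed.
Lemma gradedbI U W : gradedb U -> gradedb W -> gradedb (U :&: W)%VS.
Proof.
move=> hU hW b w /memv_capP [hu hv].
by apply/memv_capP; split; [apply: hU | apply: hW].
Qed.
Lemma gradedbB A B : gradedb A -> gradedb B -> gradedb (bs A B).
Proof.
move=> hA hB c w hw.
have: (bs A B <= lfun_preim (pi c) (bs A B))%VS.
  apply: brack_sub => a b ha hb; rewrite -memv_preim.
  have ht i j : pi c (br (pi i a) (pi j b)) \in bs A B.
    rewrite (pi_hom c (hgr (pi_mem i a) (pi_mem j b))).
    by case: ifP => _; [apply: brack_mem; [apply: hA | apply: hB] | apply: mem0v].
  rewrite -(pi_sum a) -(pi_sum b) !brDl !brDr !linearD /=.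
  by do !apply: memvD; [exact: (ht false false)|exact: (ht false true)|exact: (ht true false)|exact: (ht true true)].
by move/subvP => /(_ w hw); rewrite -memv_preim.
Qed.

Lemma brpi k c x w : x \in cp k -> br x (pi c w) = pi (k (+) c) (br x w).
Proof.
move=> hx; rewrite -{2}(pi_sum w) brDr linearD /=.
rewrite (pi_hom (k (+) c) (hgr hx (pi_mem false w))).
rewrite (pi_hom (k (+) c) (hgr hx (pi_mem true w))).
by case: k c {hx} => [] [] /=; rewrite ?addr0 ?add0r.
Qed.

Lemma giP I : gi I <-> gradedb I /\ (forall x v, v \in I -> br x v \in I).
Proof.
rewrite /graded_ideal; split=> [[h1 h2]|[h1 h2]]; split.
- by apply/graded_b.
- by apply/idealP.
- by apply/graded_b.
- by apply/idealP.
Qed.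

Lemma ex_hom (I J : {vspace V}) : gradedb I -> ~~ (I <= J)%VS ->
  exists b v, [/\ v \in I, v \notin J & v \in cp b].
Proof.
move=> gI /subvPn [w hw nw].
case h0: (pi false w \in J).
  case h1: (pi true w \in J); first by rewrite hom_dec in nw.
  by exists true, (pi true w); rewrite h1 pi_mem gI.
by exists false, (pi false w); rewrite h0 pi_mem gI.
Qed.

Lemma cap_line (J : {vspace V}) v : v \notin J -> (J :&: <[v]> = 0)%VS.
Proof.
move=> nv; apply/eqP; rewrite -subv0; apply/subvP => w /memv_capP [hw /vlineP [k hk]].
rewrite memv0; apply/eqP; move: hw; rewrite hk.
have [->|nk] := eqVneq k 0; first by rewrite scale0r.
move=> h; case/negP: nv; have := memvZ k^-1 h.
by rewrite scalerA mulVf // scale1r.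
Qed.

Lemma finish (J I : {vspace V}) b v : gi J -> (J <= I)%VS -> v \in I -> v \notin J ->
  v \in cp b -> (forall y, br y v \in (J + <[v]>)%VS) ->
  exists L, [/\ gi L, (J <= L)%VS, (L <= I)%VS & \dim L = (\dim J).+1].
Proof.
move=> /giP [gJ iJ] JI vI nv vb hy.
exists (J + <[v]>)%VS; split.
- apply/giP; split.
    apply: gradedbD => // c w /vlineP [k ->]; rewrite linearZ /= (pi_hom c vb).
    by case: ifP => _; [apply: memvZ; apply: memv_line | rewrite scaler0 mem0v].
  move=> x w /memv_addP [j hj [u /vlineP [k ->] ->]].
  rewrite brDr brZr; apply: memvD; first by apply: (subvP (addvSl _ _)); apply: iJ.
  by apply: memvZ.
- exact: addvSl.
- by rewrite subv_add JI -memvE.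
- rewrite dimv_disjoint_sum ?cap_line // dim_vline.
  have -> : (v != 0) by apply: contraNneq nv => ->; rewrite mem0v.
  by rewrite addn1.
Qed.

Hypothesis hcs : completely_solvable br.
Local Notation D := (bs fullv fullv).

Lemma gradedbD' : gradedb D.
Proof. by apply: gradedbB; apply: gradedbf. Qed.

Lemma inD x y : br x y \in D.
Proof. by apply: brack_mem; rewrite memvf. Qed.

Lemma sgn_f j : sgn K false j = 1.
Proof. by rewrite /sgn /= expr0. Qed.
Lemma sgn_tt : sgn K true true = -1.
Proof. by rewrite /sgn /= expr1. Qed.

Section StepMin.
Variables (J I : {vspace V}).
Hypotheses (gJ : gi J) (gI : gi I) (JI : (J <= I)%VS) (nIJ : ~~ (I <= J)%VS).
Hypothesis hmin : forall L, gi L -> (J <= L)%VS -> (L <= I)%VS -> L = J \/ L = I.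

Let gJb : gradedb J. Proof. by case/giP: gJ. Qed.
Let iJ : forall x v, v \in J -> br x v \in J. Proof. by case/giP: gJ. Qed.
Let gIb : gradedb I. Proof. by case/giP: gI. Qed.
Let iI : forall x v, v \in I -> br x v \in I. Proof. by case/giP: gI. Qed.

Lemma step_case1 : ~~ (I <= D + J)%VS ->
  exists L, [/\ gi L, (J <= L)%VS, (L <= I)%VS & \dim L = (\dim J).+1].
Proof.
move=> nIDJ.
have gL : gi (I :&: (D + J))%VS.
  apply/giP; split.
    by apply: gradedbI => //; apply: gradedbD => //; apply: gradedbD'.
  move=> x v /memv_capP [hv _]; apply/memv_capP; split; first exact: iI.
  by apply: (subvP (addvSl _ _)); apply: inD.
have JL : (J <= I :&: (D + J))%VS by rewrite subv_cap JI addvSr.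
have [LJ|LI] := hmin gL JL (capvSl _ _).
- have [b [v [vI nv vb]]] := ex_hom gIb nIJ.
  apply: (finish gJ JI vI nv vb) => y.
  apply: (subvP (addvSl _ _)); rewrite -LJ; apply/memv_capP; split; first exact: iI.
  by apply: (subvP (addvSl _ _)); apply: inD.
- by case/negP: nIDJ; rewrite -LI capvSr.
Qed.

Section Case2.
Hypothesis IDJ : (I <= D + J)%VS.

Lemma HD d v : d \in D -> v \in I -> br d v \in J.
Proof.
pose S := (bs D I + J)%VS.
have gS : gi S.
  apply/giP; split.
    by apply: gradedbD => //; apply: gradedbB => //; apply: gradedbD'.
  move=> x w /memv_addP [s hs [j hj ->]]; rewrite brDr.
  apply: memvD; last by apply: (subvP (addvSr _ _)); apply: iJ.
  have: (bs D I <= lfun_preim (ad x) S)%VS.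
    apply: brack_sub => d' v' hd' hv'; rewrite -memv_preim adE.
    apply: (subvP (addvSl _ _)).
    have key : forall i i2 y z, y \in cp i -> z \in cp i2 -> z \in D ->
        br y (br z v') \in bs D I.
      move=> i i2 y z hy hz hzD; rewrite (hjac _ hy hz).
      apply: memvD; first by apply: brack_mem => //; apply: inD.
      by apply: memvZ; apply: brack_mem => //; apply: iI.
    rewrite -(pi_sum x) brDl; apply: memvD.
      rewrite -(pi_sum d') !brDl !brDr; apply: memvD; apply: key (pi_mem _ _) (pi_mem _ _) _;
      by apply: gradedbD'.
    rewrite -(pi_sum d') !brDl !brDr; apply: memvD; apply: key (pi_mem _ _) (pi_mem _ _) _;
    by apply: gradedbD'.
  by move/subvP => /(_ s hs); rewrite -memv_preim adE.
have JS : (J <= S)%VS by apply: addvSr.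
have SI : (S <= I)%VS.
  rewrite subv_add JI andbT; apply: brack_sub => a b _ hb; exact: iI.
have [SJ|SI'] := hmin gS JS SI.
  move=> hd hv; rewrite -SJ; apply: (subvP (addvSl _ _)); exact: brack_mem.
exfalso; case/negP: nIJ.
have LC : forall k, (I <= lower_central br D k + J)%VS.
  elim=> [|k IH] //=.
  rewrite -{1}SI' subv_add addvSr andbT.
  apply: brack_sub => a b ha hb.
  move/subvP: IH => /(_ b hb) /memv_addP [l hlc [j hj ->]].
  rewrite brDr; apply: memv_add; first exact: brack_mem.
  exact: iJ.
case: hcs => n hn.
by have := LC n; rewrite hn add0v.
Qed.

Lemma HO o v : o \in V1 -> v \in I -> br o v \in J.
Proof.
move=> ho.
pose Ko := (I :&: lfun_preim (ad o) J)%VS.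
have memK w : (w \in Ko) = (w \in I) && (br o w \in J).
  by rewrite memv_cap -memv_preim adE.
have gK : gi Ko.
  apply/giP; split.
    move=> c w; rewrite !memK => /andP [wI ow]; rewrite gIb //=.
    by rewrite (brpi (k:=true)) //; apply: gJb.
  move=> x w; rewrite !memK => /andP [wI ow]; rewrite iI //=.
  have key : forall j y, y \in cp j -> br o (br y w) \in J.
    move=> j y hy; rewrite (hjac (i:=true) _ ho hy).
    by apply: memvD; [apply: HD => //; apply: inD | apply: memvZ; apply: iJ].
  by rewrite -(pi_sum x) brDl brDr; apply: memvD; apply: key (pi_mem _ _).
have JK : (J <= Ko)%VS.
  by apply/subvP => w hw; rewrite memK (subvP JI) //= iJ.
have [KJ|KI] := hmin gK JK (capvSl _ _).
  exfalso; have /subvPn [w wI nw] := nIJ.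
  have h2 : br o (br o w) \in J.
    have e := hjac (i:=true) (j:=true) w ho ho; rewrite sgn_tt scaleN1r in e.
    have : br o (br o w) + br o (br o w) \in J.
      by rewrite {1}e addrNK; apply: HD => //; apply: inD.
    rewrite -mulr2n -scaler_nat => /(memvZ (2%:R)^-1).
    by rewrite scalerA mulVf // scale1r.
  have : br o w \in Ko by rewrite memK iI.
  rewrite KJ => h; case/negP: nw; rewrite -KJ memK wI.
  exact: h.
move=> hv; have : v \in Ko by rewrite KI.
by rewrite memK => /andP [].
Qed.

Lemma HE x : x \in V0 -> exists a, forall v, v \in I -> br x v - a *: v \in J.
Proof.
move=> hx.
pose C := (I :\: J)%VS.
have CJ0 : (C :&: J = 0)%VS by apply: capv_diff.
have CJI : (C + J = I)%VS by rewrite addv_diff; apply/addv_idPl.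
have Cnz : C != 0%VS by rewrite diffv_eq0.
pose f : 'End(subvs_of C) :=
  (linfun (vsproj C) \o daddv_pi C J \o ad x \o linfun vsval)%VF.
have dpos : (0 < \dim {:subvs_of C})%N.
  by rewrite dimvf /dim /= lt0n dimv_eq0.
have [a [w wnz hw]] := exists_eig f dpos.
pose c := vsval w.
have hc : c \in C by apply: subvsP.
have cnz : c != 0.
  apply: contraNneq wnz => h; apply/eqP/subvs_inj; rewrite -/c h.
  by rewrite linear0.
have hw' : daddv_pi C J (br x c) = a *: c.
  have := congr1 vsval hw; rewrite !comp_lfunE !lfunE /= vsprojK ?memv_pi //.
pose Ex := (I :&: lfun_preim (ad x - a *: \1)%VF J)%VS.
have memE v : (v \in Ex) = (v \in I) && (br x v - a *: v \in J).
  by rewrite memv_cap -memv_preim add_lfunE opp_lfunE scale_lfunE id_lfunE adE.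
have gE : gi Ex.
  apply/giP; split.
    move=> c' v; rewrite !memE => /andP [vI hv]; rewrite gIb //=.
    rewrite (brpi (k:=false)) // -linearZ -linearB /=.
    exact: gJb.
  move=> y v; rewrite !memE => /andP [vI hv]; rewrite iI //=.
  have key : forall j z, z \in cp j -> br x (br z v) - a *: br z v \in J.
    move=> j z hz; rewrite (hjac (i:=false) _ hx hz) sgn_f scale1r.
    rewrite -addrA -brZr -brBr; apply: memvD; first by apply: HD => //; apply: inD.
    exact: iJ.
  rewrite -(pi_sum y) !brDl brDr scalerDr opprD addrACA.
  by apply: memvD; apply: key (pi_mem _ _).
have JE : (J <= Ex)%VS.
  by apply/subvP => v hv; rewrite memE (subvP JI) //= memvB // ?iJ ?memvZ.
have cI : c \in I by rewrite -CJI; apply: (subvP (addvSl _ _)).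
have cE : c \in Ex.
  rewrite memE cI /=.
  have hz : br x c \in (C + J)%VS by rewrite CJI; apply: iI.
  have e := daddv_pi_add CJ0 hz; rewrite hw' in e.
  by rewrite -{1}e addrC addKr memv_pi.
have [EJ|EI] := hmin gE JE (capvSl _ _).
  exfalso; move: cE; rewrite EJ => cJ.
  have : c \in (C :&: J)%VS by rewrite memv_cap hc.
  by rewrite CJ0 memv0 (negbTE cnz).
exists a => v hv; have : v \in Ex by rewrite EI.
by rewrite memE => /andP [].
Qed.

Lemma step_case2 : exists L, [/\ gi L, (J <= L)%VS, (L <= I)%VS & \dim L = (\dim J).+1].
Proof.
have [b [v [vI nv vb]]] := ex_hom gIb nIJ.
apply: (finish gJ JI vI nv vb) => y.
rewrite -(pi_sum y) brDl; apply: memvD.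
  have [a ha] := HE (pi_mem false y).
  rewrite -(subrK (a *: v) (br _ v)); apply: memv_add; first exact: ha.
  by apply: memvZ; apply: memv_line.
by apply: (subvP (addvSl _ _)); apply: HO (pi_mem true y) vI.
Qed.

End Case2.

End StepMin.

Lemma step_min J I : gi J -> gi I -> (J <= I)%VS -> ~~ (I <= J)%VS ->
  (forall L, gi L -> (J <= L)%VS -> (L <= I)%VS -> L = J \/ L = I) ->
  exists L, [/\ gi L, (J <= L)%VS, (L <= I)%VS & \dim L = (\dim J).+1].
Proof.
move=> gJ gI JI nIJ hmin.
have [h|h] := boolP (I <= D + J)%VS.
  by apply: step_case2; assumption.
by apply: step_case1; assumption.
Qed.

Lemma step n : forall J I, (\dim I <= n)%N -> gi J -> gi I -> (J <= I)%VS ->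
  ~~ (I <= J)%VS ->
  exists L, [/\ gi L, (J <= L)%VS, (L <= I)%VS & \dim L = (\dim J).+1].
Proof.
elim: n => [|n IH] J I hd gJ gI JI nIJ.
  by move: hd; rewrite leqn0 dimv_eq0 => /eqP I0; rewrite I0 sub0v in nIJ.
case: (classic (exists L, [/\ gi L, (J <= L)%VS, (L <= I)%VS, L <> J & L <> I])).
  move=> [L [gL JL LI LnJ LnI]].
  have dL : (\dim L < \dim I)%N.
    rewrite ltn_neqAle dimvS // andbT; apply/negP => /eqP e; apply: LnI.
    by apply/eqP; rewrite eqEdim LI e leqnn.
  have nLJ : ~~ (L <= J)%VS.
    by apply/negP => LJ; apply: LnJ; apply/subv_anti; rewrite LJ JL.
  have [M [gM JM ML dM]] := IH J L (leq_trans dL hd) gJ gL JL nLJ.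
  by exists M; split => //; apply: subv_trans ML LI.
move=> nex; apply: step_min => // L gL JL LI.
have [->|nJ] := eqVneq L J; first by left.
have [->|nI] := eqVneq L I; first by right.
by exfalso; apply: nex; exists L; split => //; apply/eqP.
Qed.

Lemma gi0 : gi 0%VS.
Proof.
apply/giP; split; first exact: gradedb0.
by move=> x v; rewrite memv0 => /eqP ->; rewrite br0r mem0v.
Qed.

Lemma gif : gi fullv.
Proof. by apply/giP; split; [exact: gradedbf | move=> *; apply: memvf]. Qed.
End Main.

Unset Implicit Arguments. Set Strict Implicit. Set Printing Implicit Defensive.

Theorem lemma5p1 (K : closedFieldType) (p : nat) (pK : p \in [pchar K]) (p_gt2 : (2 < p)%N)
    (V : vectType K) (br : V -> V -> V) (V0 V1 : {vspace V})
    (hLie : is_lie_superalgebra br V0 V1)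
    (hcs : completely_solvable br) :
  (forall I : {vspace V}, minimal_graded_ideal br V0 V1 I -> \dim I = 1%N) /\
  (exists G : nat -> {vspace V},
     [/\ G 0%N = fullv, G (\dim (fullv : {vspace V})) = 0%VS &
      forall i : nat, (i <= \dim (fullv : {vspace V}))%N ->
        [/\ graded_ideal br V0 V1 (G i),
            \dim (G i) = (\dim (fullv : {vspace V}) - i)%N &
            (i < \dim (fullv : {vspace V}))%N -> (G i.+1 <= G i)%VS]]).
Proof.
have two_nz : (2%:R : K) != 0.
  rewrite -(dvdn_pcharf pK 2); apply/negP => /(dvdn_leq (isT : (0 < 2)%N)).
  by rewrite leqNgt p_gt2.
have st := step hLie two_nz hcs.
have g0 := gi0 hLie; have gf := gif hLie.
split.
  move=> I [gI Inz hmin].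
  have nI0 : ~~ (I <= 0)%VS by rewrite subv0.
  have [L [gL _ LI dL]] := st _ 0%VS I (leqnn _) g0 gI (sub0v _) nI0.
  rewrite dimv0 in dL.
  have [L0|LI'] := hmin L gL LI.
    by move: dL; rewrite L0 dimv0.
  by rewrite -LI'.
set N := \dim (fullv : {vspace V}).
pose nxt (J : {vspace V}) := epsilon (inhabits 0%VS)
  (fun L => [/\ graded_ideal br V0 V1 L, (J <= L)%VS & \dim L = (\dim J).+1]).
pose H k := iter k nxt 0%VS.
have HS k : H k.+1 = nxt (H k) by [].
have base : forall k, (k <= N)%N -> graded_ideal br V0 V1 (H k) /\ \dim (H k) = k.
  elim=> [|k IH] hk; first by split; rewrite //= dimv0.
  have [gk dk] := IH (ltnW hk).
  have ex : exists L, [/\ graded_ideal br V0 V1 L, (H k <= L)%VS & \dim L = (\dim (H k)).+1].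
    have nf : ~~ (fullv <= H k)%VS.
      by apply/negP => /dimvS; rewrite dk -/N leqNgt hk.
    have [L [gL kL _ dL]] := st _ (H k) fullv (leqnn _) gk gf (subvf _) nf.
    by exists L.
  have [gL kL dL] := epsilon_spec (inhabits 0%VS) _ ex.
  by rewrite HS; split => //; rewrite dL dk.
have incr : forall k, (k < N)%N -> (H k <= H k.+1)%VS.
  move=> k hk; have [gk dk] := base k (ltnW hk).
  have ex : exists L, [/\ graded_ideal br V0 V1 L, (H k <= L)%VS & \dim L = (\dim (H k)).+1].
    have nf : ~~ (fullv <= H k)%VS.
      by apply/negP => /dimvS; rewrite dk -/N leqNgt hk.
    have [L [gL kL _ dL]] := st _ (H k) fullv (leqnn _) gk gf (subvf _) nf.
    by exists L.
  by have [gL kL dL] := epsilon_spec (inhabits 0%VS) _ ex; rewrite HS.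
exists (fun i => H (N - i)%N); split.
- rewrite subn0; have [_ dN] := base N (leqnn _).
  apply/eqP; rewrite eqEdim subvf dN.
  by rewrite /N leqnn.
- by rewrite subnn.
- move=> i hi; have [gi di] := base (N - i)%N (leq_subr _ _).
  split => // ltiN.
  have e : (N - i = (N - i.+1).+1)%N by rewrite subnSK.
  rewrite e; apply: incr.
  by rewrite -e leq_subr.
Qed.
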